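(* Consider a many-sorted first-order vocabulary with sorts $U_a, U_b$, binary relation symbols $R_a$ of type $U_a \times U_b$ and $R_b$ of type $U_b \times U_a$, a constant $c$ of sort $U_a$, and a unary predicate $p$ on sort $U_a$. Assume the regular sequents (A1) $R_a(c,y) \wedge R_b(y,x) \vdash_{\{x,y\}} p(x)$, (A2) $R_a(c,y) \wedge p(x) \vdash_{\{x,y\}} R_b(y,x)$, (A3) $\vdash \exists y.\, R_a(c,y)$, where $x$ has sort $U_a$ and $y$ has sort $U_b$. Let $q(x) \equiv \exists y.\,[R_a(x,y) \wedge R_b(y,x)]$. Then from (A1)–(A3) one can infer, in regular logic, the sequents (F1) $p(c) \vdash q(c)$ and (F2) $q(c) \vdash p(c)$.
   Context: Regular logic is the fragment of many-sorted first-order logic whose judgements are sequents $\phi \vdash_X \psi$ where $\phi,\psi$ are built from atomic formulas using conjunction (including the empty conjunction $\top$) and existential quantification, and $X$ is a finite set of variables containing all free variables of $\phi,\psi$; the sequent means $\forall x_1\cdots\forall x_n[\phi \Rightarrow \psi]$ for $X=\{x_1,\dots,x_n\}$. $\vdash_X \psi$ abbreviates $\top \vdash_X \psi$, and $\phi \vdash \psi$ abbreviates $\phi \vdash_{\varnothing} \psi$. *)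

(* Defs.v *)
(* A deep embedding of regular logic (Johnstone, Elephant D1.3)
   over the two-sorted vocabulary  U_a, U_b, R_a : U_a x U_b, R_b : U_b x U_a,
   c : U_a, p ⊆ U_a  (with equality), using de Bruijn variables. *)
From Stdlib Require Import List Arith.
Import ListNotations.

Inductive sort : Type := Ua | Ub.

Inductive term : Type :=
| tvar : nat -> term
| tc : term.

Inductive form : Type :=
| FTop : form
| FAnd : form -> form -> form
| FEx : sort -> form -> form            (* binds de Bruijn index 0 of the given sort *)
| FEq : sort -> term -> term -> form
| FRa : term -> term -> form
| FRb : term -> term -> form
| FP : term -> form.

Definition wf_term (G : list sort) (t : term) (s : sort) : Prop :=
  match t with
  | tvar n => nth_error G n = Some s
  | tc => s = Ua
  end.

Fixpoint wf (G : list sort) (f : form) : Prop :=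
  match f with
  | FTop => True
  | FAnd a b => wf G a /\ wf G b
  | FEx s a => wf (s :: G) a
  | FEq s t u => wf_term G t s /\ wf_term G u s
  | FRa t u => wf_term G t Ua /\ wf_term G u Ub
  | FRb t u => wf_term G t Ub /\ wf_term G u Ua
  | FP t => wf_term G t Ua
  end.

Definition tshift (t : term) : term :=
  match t with tvar n => tvar (S n) | tc => tc end.

Definition subst_term (sg : nat -> term) (t : term) : term :=
  match t with tvar n => sg n | tc => tc end.

Definition up (sg : nat -> term) : nat -> term :=
  fun n => match n with 0 => tvar 0 | S m => tshift (sg m) end.

Fixpoint subst (sg : nat -> term) (f : form) : form :=
  match f with
  | FTop => FTop
  | FAnd a b => FAnd (subst sg a) (subst sg b)
  | FEx s a => FEx s (subst (up sg) a)
  | FEq s t u => FEq s (subst_term sg t) (subst_term sg u)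
  | FRa t u => FRa (subst_term sg t) (subst_term sg u)
  | FRb t u => FRb (subst_term sg t) (subst_term sg u)
  | FP t => FP (subst_term sg t)
  end.

Definition shift (f : form) : form := subst (fun n => tvar (S n)) f.

Definition sub_ok (G : list sort) (sg : nat -> term) (D : list sort) : Prop :=
  forall n s, nth_error D n = Some s -> wf_term G (sg n) s.

Definition repl (i j : nat) : nat -> term :=
  fun k => if Nat.eqb k i then tvar j else tvar k.

Inductive der (ax : list sort -> form -> form -> Prop)
  : list sort -> form -> form -> Prop :=
| d_ax : forall G a b, ax G a b -> wf G a -> wf G b -> der ax G a b
| d_id : forall G a, wf G a -> der ax G a a
| d_cut : forall G a b c, der ax G a b -> der ax G b c -> der ax G a c
| d_subst : forall D G sg a b, sub_ok G sg D -> der ax D a b ->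
    der ax G (subst sg a) (subst sg b)
| d_eq_refl : forall G s i, nth_error G i = Some s ->
    der ax G FTop (FEq s (tvar i) (tvar i))
| d_eq_subst : forall G s i j a,
    nth_error G i = Some s -> nth_error G j = Some s -> wf G a ->
    der ax G (FAnd (FEq s (tvar i) (tvar j)) a) (subst (repl i j) a)
| d_top : forall G a, wf G a -> der ax G a FTop
| d_and_l : forall G a b, wf G a -> wf G b -> der ax G (FAnd a b) a
| d_and_r : forall G a b, wf G a -> wf G b -> der ax G (FAnd a b) b
| d_and_i : forall G a b c, der ax G a b -> der ax G a c -> der ax G a (FAnd b c)
(* existential rule (both directions of the double bar):
   phi |-_{G,y} psi  iff  (exists y. phi) |-_G psi, y not free in psi *)
| d_ex_i : forall G s a b, wf G b -> der ax (s :: G) a (shift b) -> der ax G (FEx s a) b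
| d_ex_e : forall G s a b, der ax G (FEx s a) b -> der ax (s :: G) a (shift b)
| d_frob : forall G s a b, wf G a -> wf (s :: G) b ->
    der ax G (FAnd a (FEx s b)) (FEx s (FAnd (shift a) b)).

(* The theory (A1)-(A3). Context [Ua; Ub]: x = tvar 0 : U_a, y = tvar 1 : U_b. *)
Inductive axA : list sort -> form -> form -> Prop :=
| A1 : axA [Ua; Ub] (FAnd (FRa tc (tvar 1)) (FRb (tvar 1) (tvar 0))) (FP (tvar 0))
| A2 : axA [Ua; Ub] (FAnd (FRa tc (tvar 1)) (FP (tvar 0))) (FRb (tvar 1) (tvar 0))
| A3 : axA [] FTop (FEx Ub (FRa tc (tvar 0))).

(* q(x) = exists y. R_a(x,y) /\ R_b(y,x), with x := c *)
Definition q_c : form := FEx Ub (FAnd (FRa tc (tvar 0)) (FRb (tvar 0) tc)).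

(* Main.v *)
Require Import Defs.
From Stdlib Require Import List.
Import ListNotations.

Definition sg0 : nat -> term := fun n => match n with 0 => tc | _ => tvar 0 end.

Lemma sg0_ok : sub_ok [Ub] sg0 [Ua; Ub].
Proof.
  intros [|[|n]] s H; simpl in *; try (inversion H; subst; reflexivity).
  destruct n; discriminate.
Qed.

Lemma exI : der axA [Ub] (FAnd (FRa tc (tvar 0)) (FRb (tvar 0) tc)) q_c.
Proof.
  exact (d_ex_e axA [] Ub _ _ (d_id axA [] q_c (conj (conj eq_refl eq_refl) (conj eq_refl eq_refl)))).
Qed.

Theorem lemma3 : der axA nil (FP tc) q_c /\ der axA nil q_c (FP tc).
Proof.
  split.
  - apply d_cut with (b := FAnd (FP tc) (FEx Ub (FRa tc (tvar 0)))).
    + apply d_and_i. apply d_id; simpl; auto.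
      apply d_cut with (b := FTop). apply d_top; simpl; auto.
      apply d_ax. constructor. simpl; auto. simpl; auto.
    + apply d_cut with (b := FEx Ub (FAnd (shift (FP tc)) (FRa tc (tvar 0)))).
      * apply d_frob; simpl; auto.
      * apply d_ex_i. simpl; split; simpl; auto.
        change (shift q_c) with q_c.
        eapply d_cut; [|exact exI].
        apply d_and_i.
        -- apply d_and_r; simpl; auto.
        -- apply d_cut with (b := FAnd (FRa tc (tvar 0)) (FP tc)).
           ++ apply d_and_i. apply d_and_r; simpl; auto. apply d_and_l; simpl; auto.
           ++ change (FAnd (FRa tc (tvar 0)) (FP tc)) with
                (subst sg0 (FAnd (FRa tc (tvar 1)) (FP (tvar 0)))).
              change (FRb (tvar 0) tc) with (subst sg0 (FRb (tvar 1) (tvar 0))).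
              apply d_subst with (D := [Ua; Ub]). apply sg0_ok.
              apply d_ax. constructor. simpl; auto. simpl; auto.
  - apply d_ex_i. simpl; auto.
    change (shift (FP tc)) with (subst sg0 (FP (tvar 0))).
    change (FAnd (FRa tc (tvar 0)) (FRb (tvar 0) tc)) with
      (subst sg0 (FAnd (FRa tc (tvar 1)) (FRb (tvar 1) (tvar 0)))).
    apply d_subst with (D := [Ua; Ub]). apply sg0_ok.
    apply d_ax. constructor. simpl; auto. simpl; auto.
Qed.
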